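(* There exists an MDP $M$ and a policy class $\Pi\subset\Pi_{\mathrm{RNS}}$ with horizon $H=1$ such that $C^M_{\infty;h}\le 2$ (and hence $\mathsf{Cov}^M_{h,\varepsilon}\le2$ as well), yet for all $\varepsilon>0$, $$\inf_{p\in\Delta(\Pi)}\Psi^M_{\infty;h,\varepsilon}(p)\ge\frac{1}{\varepsilon},$$ and in particular $\inf_{p\in\Delta(\Pi)}\Psi^M_{\infty;h,0}(p)=\infty$.
   Context: Episodic reward-free MDP (countable states $\mathcal{X}$, actions $\mathcal{A}$, horizon $H$); $\Pi_{\mathrm{RNS}}$ randomized non-stationary policies; $d^{M,\pi}_h(x,a)$ layer-$h$ occupancy, $d^{M,p}_h=\mathbb{E}_{\pi\sim p}d^{M,\pi}_h$. Definitions: $C^M_{\infty;h}=\inf_{\mu\in\Delta(\mathcal{X}\times\mathcal{A})}\sup_{\pi\in\Pi}\sup_{(x,a)}\frac{d^{M,\pi}_h(x,a)}{\mu(x,a)}$; $\mathsf{Cov}^M_{h,\varepsilon}=\inf_{p\in\Delta(\Pi)}\sup_{\pi\in\Pi}\mathbb{E}^{M,\pi}\big[\frac{d^{M,\pi}_h(x_h,a_h)}{d^{M,p}_h(x_h,a_h)+\varepsilon d^{M,\pi}_h(x_h,a_h)}\big]$; admissible $L_\infty$-coverage $\Psi^M_{\infty;h,\varepsilon}(p)=\sup_{\pi\in\Pi}\sup_{(x,a)}\frac{d^{M,\pi}_h(x,a)}{d^{M,p}_h(x,a)+\varepsilon d^{M,\pi}_h(x,a)}$. *)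

(* Defs.v *)
From mathcomp Require Import all_boot all_order all_algebra.
From mathcomp Require Import all_classical all_reals all_analysis.
Set Implicit Arguments. Unset Strict Implicit. Unset Printing Implicit Defensive.
Import GRing.Theory Num.Theory.
Local Open Scope classical_set_scope.
Local Open Scope ring_scope.
Local Open Scope ereal_scope.

(* Episodic reward-free MDPs over countable state/action types, layers
   indexed h = 1, 2, ..., H.  Rewards play no role (reward-free). *)
Section MDP.
Context (R : realType) (X A : countType).

Definition is_dist (T : choiceType) (p : T -> R) : Prop :=
  (forall t, (0 <= p t)%R) /\ \esum_(t in [set: T]) (p t)%:E = 1.

(* init x = P(x_1 = x);  trans h x a x' = P_h(x_{h+1} = x' | x_h = x, a_h = a) *)
Record mdp := MDP {
  horizon : nat;
  init : X -> R;
  trans : nat -> X -> A -> X -> R }.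

Definition valid_mdp (M : mdp) : Prop :=
  is_dist (init M) /\ forall h x a, is_dist (trans M h x a).

(* randomized non-stationary policy: pi h x a = pi_h(a | x) *)
Definition policy := nat -> X -> A -> R.

Definition Pi_RNS : set policy := [set pi | forall h x, is_dist (pi h x)].

(* layer-(n+1) occupancy d_{n+1}^{M,pi}(x,a) *)
Fixpoint occ_aux (M : mdp) (pi : policy) (n : nat) : X * A -> \bar R :=
  match n with
  | 0%N => fun xa => (init M xa.1 * pi 1%N xa.1 xa.2)%:E
  | n'.+1 => fun xa =>
      (\esum_(ya in [set: X * A])
          (occ_aux M pi n' ya * (trans M n'.+1 ya.1 ya.2 xa.1)%:E))
      * (pi n'.+2 xa.1 xa.2)%:E
  end.

Definition occ (M : mdp) (pi : policy) (h : nat) : X * A -> \bar R :=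
  occ_aux M pi h.-1.

Definition Delta (Pi : set policy) : set (policy -> R) :=
  [set p | (forall pi, (0 <= p pi)%R) /\ \esum_(pi in Pi) (p pi)%:E = 1].

Definition occ_mix (M : mdp) (Pi : set policy) (p : policy -> R) (h : nat)
  : X * A -> \bar R :=
  fun xa => \esum_(pi in Pi) ((p pi)%:E * occ M pi h xa).

(* ratio a / b with conventions 0/0 = 0 and a/0 = +oo for a > 0 *)
Definition ediv (a b : \bar R) : \bar R :=
  if b == 0 then (if a == 0 then 0 else +oo) else a * ((fine b)^-1)%:E.

Definition Cinf (M : mdp) (Pi : set policy) (h : nat) : \bar R :=
  ereal_inf [set ereal_sup
      [set r | exists pi xa, Pi pi /\ r = ediv (occ M pi h xa) (mu xa)%:E]
    | mu in [set mu : X * A -> R | is_dist mu]].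

Definition Cov (M : mdp) (Pi : set policy) (h : nat) (eps : R) : \bar R :=
  ereal_inf [set ereal_sup
      [set \esum_(xa in [set: X * A])
            (occ M pi h xa *
             ediv (occ M pi h xa) (occ_mix M Pi p h xa + eps%:E * occ M pi h xa))
        | pi in Pi]
    | p in Delta Pi].

Definition Psi (M : mdp) (Pi : set policy) (h : nat) (eps : R) (p : policy -> R)
  : \bar R :=
  ereal_sup [set r | exists pi xa, Pi pi /\
     r = ediv (occ M pi h xa) (occ_mix M Pi p h xa + eps%:E * occ M pi h xa)].

End MDP.

(* Main.v *)
Require Import Defs.
From mathcomp Require Import all_boot all_order all_algebra.
From mathcomp Require Import all_classical all_reals all_analysis.
From mathcomp Require Import ring lra.
Import Order.TTheory GRing.Theory Num.Theory.
Local Open Scope classical_set_scope.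
Local Open Scope ring_scope.
Local Open Scope ereal_scope.

Section Ex.
Variable R : realType.

Lemma esum_geo (c r : R) : (0 <= c)%R -> (0 <= r)%R -> (r < 1)%R ->
  \esum_(a in [set: nat]) (c * r ^+ a)%:E = (c / (1 - r))%:E.
Proof.
move=> c0 r0 r1.
rewrite -nneseries_esumT; last by move=> n; rewrite lee_fin mulr_ge0 // exprn_ge0.
apply: cvg_lim => //.
apply: cvg_EFin.
  by apply: nearW => n; rewrite /eseries /= sumEFin.
rewrite [X in X @ _ --> _](_ : _ = series (geometric c r)); last first.
  by apply/funext => x; rewrite /= /eseries /= sumEFin.
by apply: cvg_geometric_series; rewrite ger0_norm.
Qed.

Lemma esum_supp (T : choiceType) (S F : set T) (f : T -> \bar R) :
  finite_set F -> F `<=` S -> (forall t, S t -> ~ F t -> f t = 0) ->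
  (forall t, S t -> 0 <= f t) -> \esum_(t in S) f t = \sum_(t \in F) f t.
Proof.
move=> finF FS f0 fge0.
rewrite (esumID F S f) // (@esum1 _ _ (S `&` ~` F)); last first.
  by move=> t [St nFt]; apply: f0.
rewrite adde0 (_ : S `&` F = F); last by apply/setIidr.
by rewrite esum_fset // => t; rewrite inE => Ft; apply: fge0; apply: FS.
Qed.

Lemma sum2 (T : choiceType) (a b : T) (f : T -> \bar R) : a <> b ->
  \sum_(t \in [set a] `|` [set b]) f t = f a + f b.
Proof.
move=> ab; rewrite fsbigU0 ?fsbig_set1 //.
by move=> t [/= -> /= ba]; apply: ab.
Qed.

Lemma esum_unit (f : unit * nat -> \bar R) :
  \esum_(xa in [set: unit * nat]) f xa = \esum_(a in [set: nat]) f (tt, a).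
Proof.
apply: (reindex_esum [set: nat] [set: unit * nat] (fun a => (tt, a))).
split => //.
- by move=> a b _ _ [].
- by move=> [[] a] _; exists a.
Qed.

Lemma esum_unit1 (f : unit -> \bar R) : (0 <= f tt) ->
  \esum_(x in [set: unit]) f x = f tt.
Proof.
move=> f0; rewrite (_ : [set: unit] = [set tt]) ?esum_set1 //.
by apply/seteqP; split => [[]|[]].
Qed.


Definition q (n : nat) : R := (2^-1 : R) ^+ n.
Definition g (n : nat) : R := 2^-1 * q n.
Definition w (n : nat) : R := 3 / 4 * (4^-1 : R) ^+ n.

Lemma q_gt0 n : (0 < q n)%R. Proof. by rewrite /q exprn_gt0 // invr_gt0. Qed.
Lemma q_le1 n : (q n <= 1)%R.
Proof. by rewrite /q exprn_ile1 // ?invr_ge0 // invf_le1 // ler1n. Qed.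
Lemma g_gt0 n : (0 < g n)%R. Proof. by rewrite /g mulr_gt0 ?q_gt0 // invr_gt0. Qed.
Lemma g_le n : (g n <= 2^-1)%R.
Proof. by rewrite /g ler_piMr ?q_le1 // invr_ge0. Qed.
Lemma w_eq n : w n = (3 / 4 * (q n * q n))%R.
Proof.
rewrite /w /q -exprMn; congr (_ * _ ^+ _)%R.
by rewrite -invfM; congr (_^-1)%R; rewrite -natrM.
Qed.
Lemma w_gt0 n : (0 < w n)%R. Proof. by rewrite w_eq mulr_gt0 // mulr_gt0 // q_gt0. Qed.

Definition pol (n : nat) : policy R unit nat := fun _ _ a =>
  if n == 0%N then w a else if a == 0%N then (1 - g n)%R
  else if a == n then g n else 0%R.

Lemma pol_ge0 n h x a : (0 <= pol n h x a)%R.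
Proof.
rewrite /pol; case: ifP => _; first exact/ltW/w_gt0.
case: ifP => _; first by rewrite subr_ge0 (le_trans (g_le n)) // invf_le1 // ler1n.
by case: ifP => _ //; exact/ltW/g_gt0.
Qed.

Lemma pol_dist n h x : is_dist (pol n h x).
Proof.
split; first exact: pol_ge0.
case: n => [|n].
  rewrite /pol /= /w esum_geo //; last by rewrite invf_lt1 // ltr1n.
  by congr (_%:E); field.
rewrite (@esum_supp _ _ ([set 0%N] `|` [set n.+1])) //.
- rewrite sum2 // /pol /= eqxx -EFinD; congr (_%:E); ring.
- move=> a _ /= H; rewrite /pol /=.
  case: ifP => [/eqP a0|_]; first by case: H; left.
  by case: ifP => [/eqP an|_] //; case: H; right.
- by move=> t _; rewrite lee_fin pol_ge0.
Qed.

Definition Mex : mdp R unit nat := MDP 1 (fun _ => 1%R) (fun _ _ _ _ => 1%R).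
Definition Piex : set (policy R unit nat) := range pol.

Lemma occE (pi : policy R unit nat) xa : occ Mex pi 1 xa = (pi 1%N xa.1 xa.2)%:E.
Proof. by rewrite /occ /= mul1r. Qed.

Lemma valid_Mex : valid_mdp Mex.
Proof.
split; first by split => [t|]; rewrite ?esum_unit1 /= ?ler01 ?lee_fin ?ler01.
by move=> h x a; split => [t|]; rewrite ?esum_unit1 /= ?lee_fin ?ler01.
Qed.


Lemma q_le_half n : (0 < n)%N -> (q n <= 2^-1)%R.
Proof.
case: n => // n _; rewrite /q exprS ler_piMr ?invr_ge0 //.
exact: (q_le1 n).
Qed.

Lemma w_gq n : w n = (3 / 2 * q n * g n)%R.
Proof. by rewrite w_eq /g; field. Qed.

Lemma w_lt_g n : (0 < n)%N -> (w n < g n)%R.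
Proof.
move=> n0; have h1 := @q_le_half n n0; have h2 := q_gt0 n.
rewrite w_eq /g; nra.
Qed.

Lemma pol_inj : injective pol.
Proof.
move=> m n e.
have H a : pol m 1%N tt a = pol n 1%N tt a by rewrite e.
case: m n e H => [|m] [|n] // e H.
- have := H n.+1; rewrite /pol /= eqxx => E.
  by have := @w_lt_g n.+1 isT; rewrite E ltxx.
- have := H m.+1; rewrite /pol /= eqxx => E.
  by have := @w_lt_g m.+1 isT; rewrite E ltxx.
- have := H m.+1; rewrite /pol /= eqxx.
  case: (m =P n) => [-> //|mn].
  have -> : (m.+1 == n.+1) = false by apply/eqP => -[].
  by move=> /eqP; rewrite gt_eqF // g_gt0.
Qed.

Lemma esum_Pi (f : policy R unit nat -> \bar R) :
  \esum_(pi in Piex) f pi = \esum_(i in [set: nat]) f (pol i).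
Proof.
by apply: esum_image => a b _ _; exact: pol_inj.
Qed.

Lemma pol_le2g n h x a : (pol n h x a <= 2 * g a)%R.
Proof.
have h1 := q_le1 a; have h2 := q_gt0 a.
rewrite /pol; case: ifP => _.
  rewrite w_eq /g; nra.
case: ifP => [/eqP -> |_].
  have := g_gt0 n; rewrite /g /q expr0; lra.
case: ifP => [/eqP -> |_]; last by have := g_gt0 a; lra.
have := g_gt0 n; lra.
Qed.

Lemma ediv_pos (a b : R) : (0 < b)%R -> ediv a%:E b%:E = (a / b)%:E.
Proof.
by move=> b0; rewrite /ediv eqe (gt_eqF b0) /=.
Qed.

Lemma Cinf_le2 : Cinf Mex Piex 1 <= 2%:E.
Proof.
apply: (@le_trans _ _ (ereal_sup [set r | exists pi xa, Piex pi /\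
     r = ediv (occ Mex pi 1 xa) (g xa.2)%:E])).
  apply: ereal_inf_lbound.
  exists (fun xa => g xa.2) => //.
  split; first by move=> t; exact/ltW/g_gt0.
  rewrite esum_unit /g /q esum_geo //; last by rewrite invf_lt1 // ltr1n.
  by congr (_%:E); field.
apply: ge_ereal_sup => r [pi [xa [[n _ <-] ->]]].
rewrite occE ediv_pos ?g_gt0 // lee_fin ler_pdivrMr ?g_gt0 //.
exact: pol_le2g.
Qed.


Definition p0 (pi : policy R unit nat) : R := if pselect (pi = pol 0) then 1%R else 0%R.

Lemma p0_pol n : p0 (pol n) = if n == 0%N then 1%R else 0%R.
Proof.
rewrite /p0; have [->|nn] := eqVneq n 0%N; case: pselect => // H.
by have := pol_inj _ _ H; move: nn => /eqP nn /nn.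
Qed.

Lemma p0_Delta : Delta Piex p0.
Proof.
split; first by move=> pi; rewrite /p0; case: pselect.
rewrite esum_Pi (@esum_supp _ _ [set 0%N]) //.
- by rewrite fsbig_set1 p0_pol.
- by move=> t _ /= t0; rewrite p0_pol; case: eqP.
- by move=> t _; rewrite p0_pol lee_fin; case: eqP.
Qed.

Lemma occ_mix_p0 xa : occ_mix Mex Piex p0 1 xa = occ Mex (pol 0) 1 xa.
Proof.
rewrite /occ_mix esum_Pi (@esum_supp _ _ [set 0%N]) //.
- by rewrite fsbig_set1 p0_pol /= mul1e.
- by move=> t _ /= t0; rewrite p0_pol; case: eqP => // _; rewrite mul0e.
- move=> t _; rewrite occE -EFinM lee_fin mulr_ge0 ?pol_ge0 //.
  by rewrite p0_pol; case: eqP.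
Qed.

Lemma ratio_le (d v e : R) : (0 <= d)%R -> (0 < v)%R -> (0 <= e)%R ->
  (d * (d / (v + e * d)) <= d * d / v)%R.
Proof.
move=> d0 v0 e0; rewrite mulrA; apply: ler_wpM2l; first exact: mulr_ge0.
rewrite lef_pV2 ?posrE ?lerDl ?mulr_ge0 //.
by apply: (lt_le_trans v0); rewrite lerDl mulr_ge0.
Qed.

Lemma Cov_le2 eps : (0 < eps)%R -> Cov Mex Piex 1 eps <= 2%:E.
Proof.
move=> eps0.
apply: (@le_trans _ _ (ereal_sup [set \esum_(xa in [set: unit * nat])
            (occ Mex pi 1 xa *
             ediv (occ Mex pi 1 xa) (occ_mix Mex Piex p0 1 xa + eps%:E * occ Mex pi 1 xa))
        | pi in Piex])).
  by apply: ereal_inf_lbound; exists p0 => //; exact: p0_Delta.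
apply: ge_ereal_sup => _ [pi [n _ <-] <-].
rewrite esum_unit.
apply: (@le_trans _ _ (\esum_(a in [set: nat])
   (pol n 1%N tt a * pol n 1%N tt a / w a)%:E)).
  apply: le_esum => a _.
  rewrite occ_mix_p0 !occE /= -EFinM -EFinD ediv_pos; last first.
    by rewrite ltr_pwDl ?w_gt0 // mulr_ge0 ?pol_ge0 // ltW.
  rewrite -EFinM lee_fin {1 2 4 5}/pol /=.
  apply: ratio_le; [exact: (pol_ge0 n 1 tt a)|exact: w_gt0|exact: ltW].
case: n => [|n].
  under eq_esum do rewrite /pol /= mulrK ?unitfE ?gt_eqF ?w_gt0 //.
  rewrite /w esum_geo //; last by rewrite invf_lt1 // ltr1n.
  rewrite lee_fin; apply/ltW; rewrite (_ : 3 / 4 / (1 - 4^-1) = 1)%R; last by field.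
  by rewrite ltr1n.
rewrite (@esum_supp _ _ ([set 0%N] `|` [set n.+1])) //.
- rewrite sum2 // /pol /= eqxx -EFinD lee_fin.
  have -> : w 0 = (3 / 4)%R by rewrite /w expr0 mulr1.
  have -> : (g n.+1 * g n.+1 / w n.+1 = 3^-1)%R.
    by rewrite w_eq /g; field; rewrite gt_eqF ?q_gt0.
  have g1 := g_le n.+1; have g2 := g_gt0 n.+1.
  have h : ((1 - g n.+1) * (1 - g n.+1) / (3 / 4) <= 4 / 3)%R.
    rewrite ler_pdivrMr //; nra.
  lra.
- move=> a _ /= H; rewrite /pol /=.
  case: ifP => [/eqP a0|_]; first by case: H; left.
  by case: ifP => [/eqP an|_]; [case: H; right | rewrite mul0r mul0r].
- move=> t _; rewrite lee_fin divr_ge0 ?mulr_ge0 ?pol_ge0 //; exact/ltW/w_gt0.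
Qed.


Lemma small_p (p : policy R unit nat -> R) (N : nat) (d : R) :
  Delta Piex p -> (0 < d)%R -> exists i, (N <= i)%N /\ (p (pol i) < d)%R.
Proof.
move=> [p0 p1] d0.
have [//|H] := pselect (exists i, (N <= i)%N /\ (p (pol i) < d)%R).
exfalso.
have Hd i : (N <= i)%N -> (d <= p (pol i))%R.
  move=> Ni; rewrite leNgt; apply/negP => pd; apply: H; by exists i.
pose k := Num.Def.archi_bound (d^-1).
have hk : (d^-1 < k%:R)%R by apply: archi_boundP; rewrite invr_ge0 ltW.
have Hs : (\sum_(0 <= i < N + k) (p (pol i))%:E) <= 1.
  rewrite -p1 esum_Pi -nneseries_esumT; last by move=> n; rewrite lee_fin.
  by apply: nneseries_lim_ge => n _ _; rewrite lee_fin.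
move: Hs; rewrite sumEFin lee_fin (big_cat_nat (leq0n N) (leq_addr k N)) /=.
have h1 : (0 <= \sum_(0 <= i < N) p (pol i))%R by apply: sumr_ge0 => i _.
have h2 : (\sum_(N <= i < N + k) d <= \sum_(N <= i < N + k) p (pol i))%R.
  by apply: ler_sum_nat => i /andP[Ni _]; apply: Hd.
move: h2; rewrite sumr_const_nat addKn -mulr_natr => h2.
have e : (d * d^-1 = 1)%R by rewrite mulfV // gt_eqF.
have : (1 < d * k%:R)%R by nra.
lra.
Qed.

Lemma exists_N (e : R) : (0 < e)%R -> exists N, (q N < e)%R.
Proof.
move=> e0; pose N := Num.Def.archi_bound (e^-1).
have hN : (e^-1 < N%:R)%R by apply: archi_boundP; rewrite invr_ge0 ltW.
exists N; rewrite /q exprVn -natrX.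
have hN2 : (N%:R < (2 ^ N)%:R :> R)%R by rewrite ltr_nat ltn_expl.
rewrite -(invrK e) ltf_pV2 ?posrE ?invr_gt0 // ?(lt_trans hN hN2) //.
Qed.


Lemma occ_mix_i (p : policy R unit nat -> R) i : Delta Piex p -> (0 < i)%N ->
  occ_mix Mex Piex p 1 (tt, i) = (p (pol 0) * w i + p (pol i) * g i)%:E.
Proof.
move=> [pge0 _] i0.
rewrite /occ_mix esum_Pi (@esum_supp _ _ ([set 0%N] `|` [set i])) //.
- rewrite sum2; last by move=> h; rewrite -h in i0.
  by rewrite !occE /pol /= (gtn_eqF i0) eqxx -!EFinM -EFinD.
- move=> j _ /= H; rewrite occE /pol /=.
  case: ifP => [/eqP j0|_]; first by case: H; left.
  rewrite (gtn_eqF i0); case: ifP => [/eqP ij|_]; last by rewrite mule0.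
  by case: H; right.
- by move=> t _; rewrite occE -EFinM lee_fin mulr_ge0 ?pol_ge0.
Qed.

Lemma Psi_ge (p : policy R unit nat -> R) (eps eta : R) : Delta Piex p ->
  (0 <= eps)%R -> (0 < eta)%R -> ((eta + eps)^-1)%:E <= Psi Mex Piex 1 eps p.
Proof.
move=> Dp eps0 eta0.
have h3 : (0 < 3 :> R)%R by [].
have h2 : (0 < 2 :> R)%R by [].
have [N hN] := @exists_N (eta / 3) (divr_gt0 eta0 h3).
have [i [Ni pi]] := @small_p p (maxn N 1) _ Dp (divr_gt0 eta0 h2).
move: Ni; rewrite geq_max => /andP[Ni i0].
have qi : (q i <= q N)%R.
  by rewrite /q; apply: ler_wiXn2l; rewrite ?invr_ge0 // invf_le1 // ler1n.
have p0le : (p (pol 0) <= 1)%R.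
  have := proj2 Dp; rewrite esum_Pi => E.
  have : (p (pol 0))%:E <= \esum_(j in [set: nat]) (p (pol j))%:E.
    apply: esum_ge; exists [set 0%N]; last by rewrite fsbig_set1.
    by split => //; apply: finite_set1.
  by rewrite E lee_fin.
have p0ge := proj1 Dp (pol 0); have pige := proj1 Dp (pol i).
apply: (@le_trans _ _ (ediv (occ Mex (pol i) 1 (tt, i))
   (occ_mix Mex Piex p 1 (tt, i) + eps%:E * occ Mex (pol i) 1 (tt, i)))); last first.
  by apply: ereal_sup_ubound; exists (pol i), (tt, i); split => //; exists i.
have pii : pol i 1%N tt i = g i by rewrite /pol /= (gtn_eqF i0) eqxx.
rewrite occ_mix_i // occE /= pii -EFinM -EFinD.
have gi := g_gt0 i; have wi0 := w_gt0 i.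
have wi : (w i <= eta / 2 * g i)%R.
  rewrite w_gq; apply: ler_wpM2r; first exact: ltW.
  lra.
have pw : (p (pol 0) * w i <= w i)%R by rewrite ler_piMl // ltW.
have pg : (p (pol i) * g i <= eta / 2 * g i)%R by rewrite ler_wpM2r // ltW.
set D := (_ + _ + _)%R.
have Dle : (D <= (eta + eps) * g i)%R.
  rewrite /D mulrDl lerD2r.
  rewrite {1}(splitr eta) mulrDl.
  exact: (lerD (le_trans pw wi) pg).
have D0 : (0 <= D)%R.
  by rewrite /D; apply: addr_ge0; [apply: addr_ge0|]; apply: mulr_ge0 => //; exact: ltW.
have [->|Dn0] := eqVneq D 0%R.
  by rewrite /ediv eqxx eqe (gt_eqF gi) /= leey.
rewrite ediv_pos ?lt_def ?Dn0 // lee_fin ler_pdivlMr ?lt_def ?Dn0 // mulrC.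
by rewrite ler_pdivrMr ?ltr_pwDl // mulrC.
Qed.

End Ex.

Theorem proposition7p3 (R : realType) :
  exists (X A : countType) (M : mdp R X A) (Pi : set (policy R X A)),
    [/\ valid_mdp M, horizon M = 1%N,
        Pi `<=` @Pi_RNS R X A, Pi !=set0 & countable Pi] /\
    [/\ Cinf M Pi 1 <= 2%:E,
        (forall eps : R, (0 < eps)%R -> Cov M Pi 1 eps <= 2%:E),
        (forall eps : R, (0 < eps)%R ->
           ereal_inf [set Psi M Pi 1 eps p | p in Delta Pi] >= (eps^-1)%:E) &
        ereal_inf [set Psi M Pi 1 0 p | p in Delta Pi] = +oo].
Proof.
exists unit, nat, (Mex R), (Piex R).
split; split.
- exact: valid_Mex.
- by [].
- by move=> _ [n _ <-] h x; exact: pol_dist.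
- by exists (pol R 0), 0%N.
- exact: sub_countable (card_image_le _ _) (countableP _).
- exact: Cinf_le2.
- exact: Cov_le2.
- move=> eps eps0; apply: le_ereal_inf_tmp => _ [p Dp <-].
  apply/lee_mul01Pr; first by rewrite lee_fin invr_ge0 ltW.
  move=> r /andP[r0 r1]; rewrite -EFinM.
  have -> : (r * eps^-1 = (eps * (1 - r) / r + eps)^-1)%R.
    by field; rewrite gt_eqF //= -mulrDr subrK mulr1 gt_eqF.
  have H := @Psi_ge R p eps (eps * (1 - r) / r) Dp.
  apply: H; first exact: ltW.
  by rewrite divr_gt0 // mulr_gt0 // subr_gt0.
- apply/ereal_inf_pinfty => _ [p Dp <-] /=.
  apply/eqyP => A A0.
  have Ai : (0 < A^-1)%R by rewrite invr_gt0.
  have := @Psi_ge R p 0 (A^-1) Dp (lexx _) Ai.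
  by rewrite addr0 invrK.
Qed.
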